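(* Let $R$ be a $*$-ring. The following are equivalent: (1) $R$ is $*$-clean and $2\in U(R)$; (2) every element of $R$ is a sum of a unit and an element $t$ with $t^2=1$ and $t^*=t$.
   Context: A $*$-ring is a ring with identity with an involution $*$. A projection is $p$ with $p^2=p=p^*$. $R$ is $*$-clean if every element is a sum of a projection and a unit. $U(R)$ is the unit group. *)

(* Defs.v *)
From mathcomp Require Import all_boot all_algebra.
Set Implicit Arguments. Unset Strict Implicit. Unset Printing Implicit Defensive.
Import GRing.Theory.
Local Open Scope ring_scope.

Definition is_involution (R : ringType) (star : R -> R) : Prop :=
  [/\ (forall x y, star (x + y) = star x + star y),
      (forall x y, star (x * y) = star y * star x) &
      (forall x, star (star x) = x)].

Definition is_projection (R : ringType) (star : R -> R) (p : R) : Prop :=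
  p * p = p /\ star p = p.

Definition star_clean (R : unitRingType) (star : R -> R) : Prop :=
  forall a : R, exists p u : R, is_projection star p /\ u \is a GRing.unit /\ a = p + u.

(* Main.v *)
Require Import Defs.
From mathcomp Require Import all_boot all_algebra.
Import GRing.Theory.
Local Open Scope ring_scope.

Section S.
Variables (R : unitRingType) (star : R -> R).
Hypothesis Hstar : is_involution star.

Lemma star0 : star 0 = 0.
Proof. case: Hstar => D _ _. have := D 0 0. rewrite addr0 => /eqP.
by rewrite -subr_eq subrr eq_sym => /eqP. Qed.

Lemma starN x : star (- x) = - star x.
Proof. case: Hstar => D _ _. apply/eqP; rewrite -subr_eq0 opprK -D addNr.
by rewrite star0. Qed.

Lemma star1 : star 1 = 1.
Proof. case: Hstar => _ M K. have := M (star 1) 1. by rewrite !mulr1 K mulr1. Qed.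

Lemma starn n : star n%:R = n%:R.
Proof. case: Hstar => D _ _. elim: n => [|n IH]; first by rewrite star0.
by rewrite -natr1 D IH star1. Qed.

Lemma starV2 : (2%:R : R) \is a GRing.unit -> star (2%:R^-1) = 2%:R^-1.
Proof. move=> U. case: Hstar => _ M _.
have : star (2%:R^-1) * 2%:R = 1.
  by rewrite -{2}(starn 2) -M divrr // star1.
move=> H. apply: (mulIr U). by rewrite H mulVr.
Qed.
End S.

Theorem theorem2p5 (R : unitRingType) (star : R -> R) (Hstar : is_involution star) :
  (star_clean star /\ (2%:R : R) \is a GRing.unit) <->
  (forall a : R, exists t u : R,
      t * t = 1 /\ star t = t /\ u \is a GRing.unit /\ a = u + t).
Proof.
have HH := Hstar; case: HH => D M K.
split.
- case=> C U a.
  have [p [u [[pp sp] [uu e]]]] := C (2%:R^-1 * (a + 1)).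
  exists (2%:R * p - 1), (2%:R * u); split; last split; last split.
  + rewrite mulr_natl mulr2n !(mulrBl, mulrBr, mulrDl, mulrDr, mul1r, mulr1, pp).
    by rewrite addrK opprB addrC subrK.
  + by rewrite D (starN _ _ Hstar) M sp (starn _ _ Hstar) (star1 _ _ Hstar) (commr_nat p 2).
  + by rewrite unitrM_comm ?U // /GRing.comm commr_nat.
  + have : 2%:R * (2%:R^-1 * (a + 1)) = 2%:R * (p + u) by rewrite -e.
    rewrite mulrA divrr // mul1r => /(congr1 (fun x => x - 1)); rewrite addrK => ->.
    by rewrite mulrDr addrCA addrA.
- move=> H.
  have U : (2%:R : R) \is a GRing.unit.
    have [t [u [tt [st [uu e]]]]] := H 1.
    have eu : u = 1 - t by rewrite e addrK.
    have : u * (1 + t) = 0.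
      by rewrite eu mulrBl mul1r mulrDr mulr1 tt [t + 1]addrC subrr.
    move/(congr1 (fun x => u^-1 * x)); rewrite mulr0 mulrA mulVr // mul1r.
    move/eqP; rewrite addr_eq0 => /eqP tE.
    have -> : (2%:R : R) = u by rewrite eu -[t]opprK -tE opprK mulr2n.
    exact: uu.
  split => // a.
  have [t [u [tt [st [uu e]]]]] := H (2%:R * a - 1).
  have hc : forall x : R, 2%:R^-1 * x = x * 2%:R^-1.
    move=> x; exact: esym (commrV (commr_nat x 2)).
  exists (2%:R^-1 * (1 + t)), (2%:R^-1 * u); split; first split.
  + have e2 : (1 + t) * (1 + t) = 2%:R * (1 + t).
      rewrite mulr_natl mulr2n mulrDr !mulrDl !mul1r mulr1 tt.
      by rewrite [t + 1]addrC.
    rewrite -mulrA [(1 + t) * _]mulrA -hc -mulrA e2.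
    by rewrite [2%:R^-1 * (2%:R * _)]mulrA mulVr // mul1r.
  + by rewrite M D st (star1 _ _ Hstar) (starV2 _ _ Hstar) // hc.
  + split; first by rewrite unitrM_comm ?unitrV ?uu ?U //; exact: hc.
    apply: (mulrI U); rewrite mulrDr !mulrA divrr // !mul1r.
    by rewrite -(subrK 1 (2%:R * a)) e addrC [u + t]addrC addrA.
Qed.
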